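(* Let $\square$ be a cubical complex and $n \geq 0$. Then $\square$ embeds into $I^n$ (i.e. there is an injective map of cubical complexes $V(\square) \to V(I^n)$) if and only if the graph $G(\square)$ embeds into the graph $G(I^n)$, i.e. there is an injective map $V(\square) \to V(I^n)$ sending every edge of $\square$ to an edge of $I^n$.
   Context: A cubical complex consists of a finite vertex set $V$ and a collection $\square$ of nonempty subsets of $V$ (faces) such that: every singleton $\{v\}$, $v\in V$, is a face; for each face $F$ the poset $\hat F=\{G\in\square : G\subseteq F\}$ (ordered by inclusion) is isomorphic to the poset of nonempty faces of a cube (whose dimension is $\dim F$); and the intersection of two faces is empty or a face. $I^n$ denotes the $n$-cube as a cubical complex: vertex set $\{0,1\}^n$, and faces indexed by $(p_1,\dots,p_n)\in\{0,1,*\}^n$, the face being the set of $x\in\{0,1\}^n$ with $x_i=p_i$ whenever $p_i\neq *$. A map of cubical complexes is a function between vertex sets sending each face onto a face; an injective map is an embedding. The graph $G(\square)$ is the 1-skeleton: vertices and 1-dimensional faces (edges). *)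

(* Defs.v *)
From mathcomp Require Import all_boot.
Set Implicit Arguments. Unset Strict Implicit. Unset Printing Implicit Defensive.

Definition cube_vert (n : nat) : finType := {ffun 'I_n -> bool}.

(* The face of I^n indexed by p in {0,1,*}^n (None = * ) *)
Definition cube_face (n : nat) (p : {ffun 'I_n -> option bool}) : {set cube_vert n} :=
  [set x : cube_vert n | [forall i, if p i is Some b then x i == b else true]].

Definition cube_faces (n : nat) : {set {set cube_vert n}} :=
  [set cube_face p | p : {ffun 'I_n -> option bool}].

Definition face_below (V : finType) (faces : {set {set V}}) (F : {set V}) : {set {set V}} :=
  [set G in faces | G \subset F].

Definition face_has_dim (V : finType) (faces : {set {set V}}) (F : {set V}) (d : nat) : Prop :=
  exists phi : {set V} -> {set cube_vert d},
    [/\ {in face_below faces F &, injective phi},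
        phi @: face_below faces F = cube_faces d
      & {in face_below faces F &, forall G H : {set V}, (G \subset H) = (phi G \subset phi H)}].

Definition cubical_complex (V : finType) (faces : {set {set V}}) : Prop :=
  [/\ forall F, F \in faces -> F != set0,
      forall v : V, [set v] \in faces,
      forall F, F \in faces -> exists d, face_has_dim faces F d
    & forall F G, F \in faces -> G \in faces -> F :&: G = set0 \/ F :&: G \in faces].

Definition cc_map (V W : finType) (facesV : {set {set V}}) (facesW : {set {set W}})
  (f : V -> W) : Prop :=
  forall F, F \in facesV -> f @: F \in facesW.

Definition cc_edge (V : finType) (faces : {set {set V}}) (E : {set V}) : Prop :=
  E \in faces /\ face_has_dim faces E 1.

Definition graph_map (V W : finType) (facesV : {set {set V}}) (facesW : {set {set W}})
  (f : V -> W) : Prop :=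
  forall E, cc_edge facesV E -> cc_edge facesW (f @: E).

(* Main.v *)
Require Import Defs.
From mathcomp Require Import all_boot.
Set Implicit Arguments. Unset Strict Implicit. Unset Printing Implicit Defensive.

Definition flip n (x : cube_vert n) (i : 'I_n) : cube_vert n :=
  [ffun j => x j (+) (j == i)].

Lemma flipE n (x : cube_vert n) i j : flip x i j = x j (+) (j == i).
Proof. by rewrite ffunE. Qed.

Lemma flipK n (x : cube_vert n) i : flip (flip x i) i = x.
Proof. by apply/ffunP => j; rewrite !flipE -addbA addbb addbF. Qed.

Lemma flipC n (x : cube_vert n) i j : flip (flip x i) j = flip (flip x j) i.
Proof. by apply/ffunP => l; rewrite !flipE -!addbA (addbC (l == i)). Qed.

Lemma flip_inj n (x : cube_vert n) i j : flip x i = flip x j -> i = j.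
Proof.
move/ffunP/(_ i); rewrite !flipE eqxx.
by case: (eqVneq i j) => // _; case: (x i).
Qed.

Lemma flip_neq n (x : cube_vert n) i : flip x i != x.
Proof.
apply/negP => /eqP/ffunP/(_ i); rewrite flipE eqxx addbT.
by case: (x i).
Qed.

Lemma flip_key n (u : cube_vert n) (p q s t : 'I_n) : p != q ->
  flip (flip u p) s = flip (flip u q) t -> s = p \/ s = q.
Proof.
move=> npq E.
have Ep : flip (flip u p) s p = flip (flip u q) t p by rewrite E.
have Eq : flip (flip u p) s q = flip (flip u q) t q by rewrite E.
move: Ep Eq; rewrite /= !flipE !eqxx. case: (eqVneq s p) => [->|nsp]; first by left.
case: (eqVneq s q) => [->|nsq]; first by right.
rewrite (negbTE npq) (eq_sym q p) (negbTE npq) !addbF.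
case: (eqVneq p t) => [<-|npt]; first by rewrite (eq_sym q p) (negbTE npq); case: (u q).
by case: (u p).
Qed.

Definition wt n (x : cube_vert n) := #|[set i | x i]|.

Lemma wt_flip n (x : cube_vert n) j : x j -> wt (flip x j) < wt x.
Proof.
move=> xj; rewrite /wt (cardsD1 j [set i | x i]) inE xj.
have -> : [set i | flip x j i] = [set i | x i] :\ j.
  by apply/setP => i; rewrite !inE flipE; case: (eqVneq i j) => [->|]; rewrite ?xj //= addbF.
by [].
Qed.

Lemma comb d n (g : cube_vert d -> cube_vert n) :
  injective g -> (forall x i, exists k, g (flip x i) == flip (g x) k) ->
  g @: setT \in cube_faces n.
Proof.
move=> ginj Hg.
pose x0 : cube_vert d := [ffun => false].
pose k i := xchoose (Hg x0 i).
have Hk i : g (flip x0 i) = flip (g x0) (k i) by apply/eqP; exact: (xchooseP (Hg x0 i)).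
have kinj : injective k.
  move=> i j E; apply: (flip_inj (x:=x0)); apply: ginj; by rewrite !Hk E.
have none_x0 (x : cube_vert d) : (forall j, x j = false) -> x = x0.
  by move=> H; apply/ffunP => j; rewrite H ffunE.
have step : forall m x i, wt x <= m -> x i = false -> g (flip x i) = flip (g x) (k i).
  elim=> [|m IH] x i Hw xi; (case: (pickP [pred j | x j]) => [j /= xj|none];
      last by rewrite (none_x0 x none) Hk).
    by move: Hw; rewrite /wt (cardsD1 j) inE xj.
  have nij : j != i by apply/eqP => E; move: xi; rewrite -E xj.
  pose a := flip x j.
  have Hwa : wt a <= m by have := wt_flip xj; rewrite -/a => H; move: (leq_trans H Hw).
  have ai : a i = false by rewrite flipE eq_sym (negbTE nij) addbF.
  have aj : a j = false by rewrite flipE eqxx xj.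
  have IHi := IH a i Hwa ai; have IHj := IH a j Hwa aj.
  have ax : flip a j = x by rewrite /a flipK.
  rewrite ax in IHj.
  have [s /eqP Hs] := Hg x i.
  have [t /eqP Ht] := Hg (flip a i) j.
  rewrite flipC ax Hs IHi IHj in Ht.
  have nk : k j != k i by rewrite (inj_eq kinj).
  case: (flip_key nk Ht) => Es; last by rewrite Hs Es.
  exfalso; move: Hs; rewrite Es IHj flipK => /ginj E.
  have : flip x i = flip x j by rewrite E.
  by move/flip_inj => E2; move: nij; rewrite E2 eqxx.
pose G (x : cube_vert d) : cube_vert n :=
  [ffun j' => g x0 j' (+) (if [pick i | k i == j'] is Some i then x i else false)].
have GF y j : G (flip y j) = flip (G y) (k j).
  apply/ffunP => j'; rewrite flipE !ffunE.
  case: pickP => [i /eqP ki | nok].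
    by rewrite flipE -ki (inj_eq kinj) addbA.
  rewrite (_ : (j' == k j) = false) ?addbF //.
  by apply/negbTE; rewrite eq_sym; apply: (negbT (nok j)).
have gG : forall m x, wt x <= m -> g x = G x.
  elim=> [|m IH] x Hw; (case: (pickP [pred j | x j]) => [j /= xj|none]).
  - by move: Hw; rewrite /wt (cardsD1 j) inE xj.
  - rewrite (none_x0 x none); apply/ffunP => j'; rewrite !ffunE.
    by case: pickP => [i _|_]; rewrite ?ffunE addbF.
  - pose y := flip x j.
    have Hwy : wt y <= m by have := wt_flip xj; rewrite -/y => H; move: (leq_trans H Hw).
    have yj : y j = false by rewrite flipE eqxx xj.
    have xy : x = flip y j by rewrite /y flipK.
    rewrite xy (step _ _ _ (leqnn _) yj) (IH _ Hwy) GF //.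
  - rewrite (none_x0 x none); apply/ffunP => j'; rewrite !ffunE.
    by case: pickP => [i _|_]; rewrite ?ffunE addbF.
have gGx x : g x = G x by apply: (gG (wt x)).
pose p : {ffun 'I_n -> option bool} :=
  [ffun j' => if [pick i | k i == j'] is Some _ then None else Some (g x0 j')].
have -> : g @: setT = cube_face p.
  apply/setP => y; apply/imsetP/idP.
    move=> [x _ ->]; rewrite gGx inE; apply/forallP => j'; rewrite /p !ffunE.
    by case: pickP => [i _|_] //=; rewrite addbF.
  rewrite inE => /forallP Hy.
  exists [ffun i => y (k i) (+) g x0 (k i)] => //.
  rewrite gGx; apply/ffunP => j'; rewrite ffunE.
  move: (Hy j'); rewrite /p ffunE.
  case: pickP => [i /eqP ki | _] /=; last by move/eqP => ->; rewrite addbF.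
  by move=> _; rewrite ffunE ki addbC -addbA addbb addbF.
by apply/imsetP; exists p.
Qed.

Lemma cube_faces_n0 n F : F \in cube_faces n -> F != set0.
Proof.
case/imsetP => p _ ->; apply/set0Pn.
exists [ffun i => if p i is Some b then b else false]; rewrite inE.
by apply/forallP => i; rewrite ffunE; case: (p i).
Qed.

Lemma cube_single n (x : cube_vert n) : [set x] \in cube_faces n.
Proof.
apply/imsetP; exists [ffun i => Some (x i)] => //.
apply/setP => y; rewrite !inE; apply/eqP/forallP => [->|H] //.
  by move=> i; rewrite ffunE.
by apply/ffunP => i; move: (H i); rewrite ffunE => /eqP.
Qed.

Lemma cube_pair n (x : cube_vert n) i : [set x; flip x i] \in cube_faces n.
Proof.
apply/imsetP; exists [ffun j => if j == i then None else Some (x j)] => //.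
apply/setP => y; rewrite !inE; apply/idP/idP.
- move=> /orP[]/eqP-> ; apply/forallP => j; rewrite ?ffunE.
    by case: (j == i).
  by case: (eqVneq j i) => //= _; rewrite addbF.
- move/forallP=> H.
  have H' j' : j' != i -> y j' = x j'.
    by move=> nj; move: (H j'); rewrite ffunE (negbTE nj) => /eqP.
  case: (eqVneq (y i) (x i)) => E.
    apply/orP; left; apply/eqP/ffunP => l.
    by case: (eqVneq l i) => [->|]; [|apply: H'].
  apply/orP; right; apply/eqP/ffunP => l; rewrite flipE.
  case: (eqVneq l i) => [->|nl]; last by rewrite addbF H'.
  by move: E; case: (y i); case: (x i).
Qed.

Lemma cube_edge_flip n (u w : cube_vert n) :
  [set u; w] \in cube_faces n -> u != w -> exists k, w = flip u k.
Proof.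
case/imsetP => p _ Ep nuw.
have [k Hk] : exists k, u k != w k.
  apply/existsP; apply: contraR nuw => /existsPn H; apply/eqP/ffunP => k.
  by apply/eqP; move: (H k); rewrite negbK.
have uin : u \in cube_face p by rewrite -Ep !inE eqxx.
have win : w \in cube_face p by rewrite -Ep !inE eqxx orbT.
have Hp j : u j != w j -> p j = None.
  move: uin win; rewrite !inE => /forallP/(_ j) + /forallP/(_ j).
  by case: (p j) => // b /eqP-> /eqP->; rewrite eqxx.
exists k; apply/ffunP => j; rewrite flipE.
case: (eqVneq j k) => [->|njk]; first by move: Hk; case: (u k); case: (w k).
rewrite addbF; apply/eqP; apply: contraT => Hj; rewrite eq_sym in Hj.
have : flip u k \in cube_face p.
  rewrite inE; apply/forallP => l; move: uin; rewrite inE => /forallP/(_ l).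
  rewrite flipE; case: (eqVneq l k) => [->|]; first by rewrite (Hp k Hk).
  by rewrite addbF.
rewrite -Ep !inE => /orP[] /eqP/ffunP E.
  by move: (E k); rewrite flipE eqxx; case: (u k).
by move: (E j) Hj; rewrite flipE (negbTE njk) addbF => ->; rewrite eqxx.
Qed.

Lemma sub2 (T : finType) (a b : T) (G : {set T}) :
  G \subset [set a; b] -> G != set0 ->
  G = [set a] \/ G = [set b] \/ G = [set a; b].
Proof.
move=> /subsetP sG /set0Pn [v vG].
have memG w : w \in G -> w = a \/ w = b by move/sG/set2P.
case: (boolP (a \in G)) => aG; case: (boolP (b \in G)) => bG.
- right; right; apply/setP => w; rewrite !inE; apply/idP/idP.
    by case/memG => ->; rewrite eqxx ?orbT.
  by case/orP => /eqP ->.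
- left; apply/setP => w; rewrite !inE; apply/idP/eqP => [|->] //.
  by move=> wG; case: (memG w wG) => // E; move: bG; rewrite -E wG.
- right; left; apply/setP => w; rewrite !inE; apply/idP/eqP => [|->] //.
  by move=> wG; case: (memG w wG) => // E; move: aG; rewrite -E wG.
- by exfalso; case: (memG v vG) => E; [move: aG|move: bG]; rewrite -E vG.
Qed.

Lemma set12_neq (T : finType) (a b : T) : a != b ->
  [/\ ([set a] == [set b]) = false, ([set a; b] == [set a]) = false
    & ([set a; b] == [set b]) = false].
Proof.
move=> nab; have nba : b != a by rewrite eq_sym.
split; apply/negbTE/negP.
- by move/eqP/setP/(_ a); rewrite !inE eqxx (negbTE nab).
- by move/eqP/setP/(_ b); rewrite !inE eqxx orbT (negbTE nba).
- by move/eqP/setP/(_ a); rewrite !inE eqxx (negbTE nab).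
Qed.

Lemma mem3 (T : finType) (A B C G : T) : G \in [set A; B; C] -> [\/ G = A, G = B | G = C].
Proof. by rewrite !inE => /orP[/orP[]|]/eqP->; [constructor 1|constructor 2|constructor 3]. Qed.
Lemma mem3I (T : finType) (A B C G : T) : [\/ G = A, G = B | G = C] -> G \in [set A; B; C].
Proof. by case=> ->; rewrite !inE eqxx ?orbT. Qed.
Ltac c3 := first [by constructor 1|by constructor 2|by constructor 3].

Lemma iso3 (T U : finType) (a b : T) (c d : U) : a != b -> c != d ->
  exists phi : {set T} -> {set U},
    [/\ {in [set [set a]; [set b]; [set a; b]] &, injective phi},
        phi @: [set [set a]; [set b]; [set a; b]] = [set [set c]; [set d]; [set c; d]]
      & {in [set [set a]; [set b]; [set a; b]] &, forall G H : {set T},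
           (G \subset H) = (phi G \subset phi H)}].
Proof.
move=> nab ncd.
have [e1 e2 e3] := set12_neq nab; have [f1 f2 f3] := set12_neq ncd.
have nba : b != a by rewrite eq_sym.
have ndc : d != c by rewrite eq_sym.
exists (fun G => if G == [set a] then [set c] else if G == [set b] then [set d] else [set c; d]).
split.
- move=> G H /mem3[]-> /mem3[]->;
    rewrite ?eqxx ?e1 ?e2 ?e3 ?(eq_sym [set b]) ?e1 //= => /eqP;
    by rewrite ?f1 ?f2 ?f3; try rewrite [_ == _]eq_sym; rewrite ?f1 ?f2 ?f3.
- apply/setP => Y; apply/imsetP/idP.
    move=> [G] /mem3[]-> ->;
    rewrite ?eqxx ?e1 ?e2 ?e3 ?(eq_sym [set b]) ?e1 /=; apply: mem3I; c3.
  move=> /mem3[]->.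
  + by exists [set a]; rewrite ?eqxx //; apply: mem3I; c3.
  + by exists [set b]; rewrite ?eqxx ?(eq_sym [set b]) ?e1 //; apply: mem3I; c3.
  + by exists [set a; b]; rewrite ?e2 ?e3 //; apply: mem3I; c3.
- move=> G H /mem3[]-> /mem3[]->;
    rewrite ?eqxx ?e1 ?e2 ?e3 ?(eq_sym [set b]) ?e1 //=;
    by rewrite ?subUset ?sub1set ?inE ?eqxx ?orbT ?(negbTE nab) ?(negbTE nba)
      ?(negbTE ncd) ?(negbTE ndc).
Qed.

Lemma dim1 (V : finType) (faces : {set {set V}}) (a b : V) :
  a != b -> (forall F, F \in faces -> F != set0) -> [set a] \in faces ->
  [set b] \in faces -> [set a; b] \in faces ->
  face_has_dim faces [set a; b] 1.
Proof.
move=> nab n0 fa fb fab.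
pose x0 : cube_vert 1 := [ffun => false].
pose x1 := flip x0 ord0.
have nx : x0 != x1 by rewrite eq_sym flip_neq.
have FB : face_below faces [set a; b] = [set [set a]; [set b]; [set a; b]].
  apply/setP => G; rewrite [in LHS]inE; apply/andP/idP.
    move=> [Gf sG]; apply: mem3I; case: (sub2 sG (n0 _ Gf)) => [->|[->|->]]; c3.
  by case/mem3 => ->; split; rewrite // ?sub1set !inE eqxx ?orbT.
have CF : cube_faces 1 = [set [set x0]; [set x1]; [set x0; x1]].
  apply/setP => G; apply/idP/idP.
    move=> Gf; apply: mem3I; have sG : G \subset [set x0; x1].
      apply/subsetP => y _; rewrite !inE; apply/orP.
      case E: (y ord0); [right|left]; apply/eqP/ffunP => i;
        by rewrite !ord1 ?flipE ?ffunE E.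
    by case: (sub2 sG (cube_faces_n0 Gf)) => [->|[->|->]]; c3.
  by case/mem3 => ->; [apply: cube_single|apply: cube_single|apply: cube_pair].
rewrite /face_has_dim FB CF; exact: iso3.
Qed.

Lemma face_param (V : finType) (faces : {set {set V}}) F d :
  (forall G, G \in faces -> G != set0) -> (forall v : V, [set v] \in faces) ->
  face_has_dim faces F d ->
  exists h : cube_vert d -> V,
    [/\ injective h, h @: setT = F & forall x i, [set h x; h (flip x i)] \in faces].
Proof.
move=> n0 s1 [phi [phiI phiIm phiM]].
have fbF w : w \in F -> [set w] \in face_below faces F by rewrite inE s1 sub1set.
have inCF G : G \in face_below faces F -> phi G \in cube_faces d.
  by move=> HG; rewrite -phiIm; apply: imset_f.
have getG Y : Y \in cube_faces d -> exists2 G, G \in face_below faces F & phi G = Y.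
  by rewrite -phiIm => /imsetP[G HG ->]; exists G.
have ex x : exists v, (v \in F) && (phi [set v] == [set x]).
  have [G HG EG] := getG _ (cube_single x).
  move: (HG); rewrite inE => /andP[Gf sGF].
  have [v vG] := set0Pn _ (n0 _ Gf).
  have vF : v \in F by apply: (subsetP sGF).
  exists v; rewrite vF /=.
  have : phi [set v] \subset [set x] by rewrite -EG -phiM ?sub1set ?fbF.
  rewrite subset1 => /orP[//|/eqP E0].
  by move: (cube_faces_n0 (inCF _ (fbF v vF))); rewrite E0 eqxx.
pose h x := xchoose (ex x).
have hP x : (h x \in F) && (phi [set h x] == [set x]) := xchooseP (ex x).
have hF x : h x \in F by case/andP: (hP x).
have hphi x : phi [set h x] = [set x] by case/andP: (hP x) => _ /eqP.
have hsub x G : G \in face_below faces F -> x \in phi G -> h x \in G.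
  by move=> HG xG; rewrite -sub1set phiM ?fbF // hphi sub1set.
have back w : w \in F -> exists2 y, y \in phi [set w] & h y = w.
  move=> wF; have [y yw] := set0Pn _ (cube_faces_n0 (inCF _ (fbF w wF))).
  by exists y => //; apply/eqP; rewrite -in_set1; apply: hsub => //; apply: fbF.
exists h; split.
- by move=> x y E; have := hphi x; rewrite E hphi => /set1_inj.
- apply/setP => v; apply/imsetP/idP => [[x _ ->] // | vF].
  by have [y _ <-] := back v vF; exists y.
- move=> x i; have [G HG EG] := getG _ (cube_pair x i).
  suff -> : [set h x; h (flip x i)] = G by move: HG; rewrite inE => /andP[].
  move: (HG); rewrite inE => /andP[Gf sGF].
  apply/setP => w; apply/idP/idP.
    by rewrite !inE => /orP[]/eqP->; apply: hsub; rewrite // EG !inE eqxx ?orbT.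
  move=> wG; have wF : w \in F by apply: (subsetP sGF).
  have [y yw hy] := back w wF.
  have : phi [set w] \subset phi G by rewrite -phiM ?fbF ?sub1set.
  move/subsetP/(_ y yw); rewrite EG -hy !inE => /orP[]/eqP->; by rewrite eqxx ?orbT.
Qed.

Theorem mainTheorem1 (V : finType) (faces : {set {set V}}) (n : nat) :
  cubical_complex faces ->
  (exists f : V -> cube_vert n, injective f /\ cc_map faces (cube_faces n) f) <->
  (exists f : V -> cube_vert n, injective f /\ graph_map faces (cube_faces n) f).
Proof.
move=> [n0 s1 hdim _]; split => [[f [finj fmap]]|[f [finj fgr]]]; exists f; split => //.
- move=> E [Ef Edim].
  have [h [hinj hIm _]] := face_param n0 s1 Edim.
  pose x0 : cube_vert 1 := [ffun => false]; pose x1 := flip x0 ord0.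
  have nx : x0 != x1 by rewrite eq_sym flip_neq.
  have allv (y : cube_vert 1) : y = x0 \/ y = x1.
    case E0: (y ord0); [right|left]; apply/ffunP => i;
      by rewrite !ord1 ?flipE ?ffunE E0.
  have EE : E = [set h x0; h x1].
    rewrite -hIm; apply/setP => v; apply/imsetP/set2P => [[y _ ->]|[]->].
      by case: (allv y) => ->; [left|right].
    by exists x0. by exists x1.
  have fE : f @: E = [set f (h x0); f (h x1)] by rewrite EE imsetU1 imset_set1.
  have fEf := fmap _ Ef; rewrite fE in fEf *.
  split => //; apply: dim1 => //.
  - by rewrite (inj_eq finj) (inj_eq hinj).
  - by move=> G; apply: cube_faces_n0.
  - exact: cube_single.
  - exact: cube_single.
- move=> F Ff; have [d Hd] := hdim F Ff.
  have [h [hinj hIm hpair]] := face_param n0 s1 Hd.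
  rewrite -hIm -imset_comp; apply: comb; first exact: inj_comp.
  move=> x i.
  have ne : h x != h (flip x i) by rewrite (inj_eq hinj) eq_sym flip_neq.
  have edge : cc_edge faces [set h x; h (flip x i)].
    by split; [apply: hpair | apply: dim1].
  have := fgr _ edge; rewrite imsetU1 imset_set1 => -[Hc _].
  have ne' : f (h x) != f (h (flip x i)) by rewrite (inj_eq finj).
  have [k Hk] := cube_edge_flip Hc ne'.
  by exists k; rewrite /= Hk.
Qed.
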